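(* Let $P,Q\in\mathbb P_d$ and $R=P^{-1}\#Q^{-1}$. Then $\operatorname{F}_R(P,Q)=\operatorname{F}^{\mathrm M}(P,Q)$.
   Context: $\mathbb P_d$ is the set of $d\times d$ complex positive definite matrices; $A\#B:=A^{1/2}(A^{-1/2}BA^{-1/2})^{1/2}A^{1/2}$ is the matrix geometric mean. The generalized fidelity is $\operatorname{F}_R(P,Q):=\operatorname{Tr}\big[\sqrt{R^{1/2}PR^{1/2}}\,R^{-1}\sqrt{R^{1/2}QR^{1/2}}\big]$, and the Matsumoto fidelity is $\operatorname{F}^{\mathrm M}(P,Q):=\operatorname{Tr}[P\#Q]$. *)

(* Defs.v *)
From HB Require Import structures.
From mathcomp Require Import all_boot all_order all_algebra.
From mathcomp Require Import sesquilinear spectral.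
From Stdlib Require Import ClassicalEpsilon.
Set Implicit Arguments. Unset Strict Implicit. Unset Printing Implicit Defensive.
Import Order.TTheory GRing.Theory Num.Theory.
Local Open Scope ring_scope.

Section MatrixMeans.
Variable C : numClosedFieldType.
Variable d : nat.

Definition adjmx (A : 'M[C]_d) : 'M[C]_d := (map_mx Num.conj A)^T.
Definition adjrow (v : 'rV[C]_d) : 'cV[C]_d := (map_mx Num.conj v)^T.

Definition posdefmx (A : 'M[C]_d) : Prop :=
  adjmx A = A /\ forall v : 'rV[C]_d, v != 0 -> 0 < (v *m A *m adjrow v) 0 0.
Definition psdmx (A : 'M[C]_d) : Prop :=
  adjmx A = A /\ forall v : 'rV[C]_d, 0 <= (v *m A *m adjrow v) 0 0.

Definition sqrtmx (A : 'M[C]_d) : 'M[C]_d :=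
  epsilon (inhabits 0) (fun B : 'M[C]_d => psdmx B /\ B *m B = A).

Definition gmean (A B : 'M[C]_d) : 'M[C]_d :=
  let a := sqrtmx A in let ai := invmx a in
  a *m sqrtmx (ai *m B *m ai) *m a.

Definition fidR (R P Q : 'M[C]_d) : C :=
  let r := sqrtmx R in
  \tr (sqrtmx (r *m P *m r) *m invmx R *m sqrtmx (r *m Q *m r)).

Definition fidM (P Q : 'M[C]_d) : C := \tr (gmean P Q).

End MatrixMeans.

(* Main.v *)
Require Import Defs.
From HB Require Import structures.
From mathcomp Require Import all_boot all_order all_algebra.
From mathcomp Require Import sesquilinear spectral.
From Stdlib Require Import ClassicalEpsilon.
Set Implicit Arguments. Unset Strict Implicit. Unset Printing Implicit Defensive.
Import Order.TTheory GRing.Theory Num.Theory Num.Def.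
Local Open Scope ring_scope.
Local Open Scope sesquilinear_scope.

Section Aux.
Variable C : numClosedFieldType.
Variable d : nat.
Implicit Types A B M : 'M[C]_d.

Lemma adjmxE A : adjmx A = A ^t*.
Proof. by rewrite /adjmx map_trmx. Qed.
Lemma adjrowE (v : 'rV[C]_d) : adjrow v = v ^t*.
Proof. by rewrite /adjrow map_trmx. Qed.

Lemma tCM m n p (A : 'M[C]_(m,n)) (B : 'M[C]_(n,p)) : (A *m B)^t* = B^t* *m A^t*.
Proof. by rewrite trmx_mul map_mxM. Qed.

Lemma tCV A : (invmx A)^t* = invmx (A^t*).
Proof. by rewrite trmx_inv map_invmx. Qed.

Definition hpd A := psdmx A /\ A \in unitmx.

Lemma herm_tC A : psdmx A -> A^t* = A.
Proof. by case=> h _; rewrite -adjmxE. Qed.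

Lemma quadM A M (v : 'rV[C]_d) : M^t* = M ->
  (v *m (M *m A *m M) *m adjrow v) = (v *m M) *m A *m adjrow (v *m M).
Proof. by move=> hM; rewrite !adjrowE tCM hM !mulmxA. Qed.

Lemma psd_cong A M : psdmx A -> M^t* = M -> psdmx (M *m A *m M).
Proof.
move=> [hA pA] hM; split.
  by rewrite adjmxE !tCM hM -adjmxE hA mulmxA.
by move=> v; rewrite quadM.
Qed.

Lemma invmxM A B : A \in unitmx -> B \in unitmx ->
  invmx (A *m B) = invmx B *m invmx A.
Proof.
move=> uA uB; have uAB : A *m B \in unitmx by rewrite unitmx_mul uA.
rewrite -[RHS]mul1mx -(mulVmx uAB) -!mulmxA (mulmxA B) mulmxV // mul1mx.
by rewrite mulmxV // mulmx1.
Qed.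

Lemma quad0 (v : 'rV[C]_d) : (v *m adjrow v) 0 0 = 0 -> v = 0.
Proof.
move=> h; apply/eqP; apply: contraTT (eqxx (0:C)) => /dotmx_is_dotmx.
by rewrite dotmxE -adjrowE h ltxx.
Qed.

Lemma hpd_inv A : hpd A -> hpd (invmx A).
Proof.
move=> [[hA pA] uA]; split; last by rewrite unitmx_inv.
split; first by rewrite adjmxE tCV -adjmxE hA.
move=> v; have := pA (v *m invmx A).
rewrite adjrowE tCM -adjmxE.
have -> : adjmx (invmx A) = invmx A by rewrite adjmxE tCV -adjmxE hA.
by rewrite !mulmxA mulmxKV // adjrowE.
Qed.

Lemma psd_hpd_cong A M : hpd A -> hpd M -> hpd (M *m A *m M).
Proof.
move=> [pA uA] [pM uM]; split; first exact: psd_cong (herm_tC pM).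
by rewrite !unitmx_mul uA uM.
Qed.

Lemma posdef_hpd A : posdefmx A -> hpd A.
Proof.
move=> [hA pA]; split.
  split=> // v; have [->|nv] := eqVneq v 0; first by rewrite !mul0mx mxE.
  exact/ltW/pA.
rewrite -row_free_unit; apply: inj_row_free => v vA0.
have [//|nv] := eqVneq v 0; have := pA v nv.
by rewrite vA0 mul0mx mxE ltxx.
Qed.

Lemma dot_ge0 (w : 'rV[C]_d) : 0 <= (w *m adjrow w) 0 0.
Proof.
have [->|nw] := eqVneq w 0; first by rewrite mul0mx mxE.
by apply/ltW; move/dotmx_is_dotmx: nw; rewrite dotmxE adjrowE.
Qed.

Lemma eigen_sqrt B (u : 'rV[C]_d) (mu : C) : psdmx B -> 0 <= mu ->
  u *m B *m B = (mu ^+ 2) *: u -> u *m B = mu *: u.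
Proof.
move=> pB mu0 huB; have hB := herm_tC pB; have [_ qB] := pB.
have [w wdef] : {w | w = u *m B - mu *: u} by eexists.
have wB : w *m B = - mu *: w.
  rewrite wdef mulmxBl -scalemxAl huB scaleNr scalerBr scalerA -expr2 opprB.
  by rewrite addrC.
suff : w = 0 by rewrite wdef; move/eqP; rewrite subr_eq0 => /eqP.
have [//|nw] := eqVneq w 0; exfalso.
have n0 : 0 < (w *m adjrow w) 0 0 by move/dotmx_is_dotmx: nw; rewrite dotmxE adjrowE.
have := qB w; rewrite wB -scalemxAl mxE.
have [mu_0|mup] := eqVneq mu 0.
  rewrite mu_0 in wdef wB.
  move=> _; move: n0; rewrite {2}wdef scale0r subr0 adjrowE tCM hB -adjrowE.
  rewrite mulmxA wB oppr0 scale0r mul0mx mxE ltxx //.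
have mupos : 0 < mu by rewrite lt_def mup mu0.
rewrite mulNr oppr_ge0 pmulr_rle0 // => h; by have := le_lt_trans h n0; rewrite ltxx.
Qed.

Lemma quad_diag (w s : 'rV[C]_d) :
  (w *m diag_mx s *m adjrow w) 0 0 = \sum_j s 0 j * (w 0 j * (w 0 j)^* ).
Proof.
rewrite mul_mx_diag !mxE; apply: eq_bigr => j _; rewrite !mxE.
by rewrite mulrCA mulrA.
Qed.

Lemma psd_diag (s : 'rV[C]_d) : (forall j, 0 <= s 0 j) -> psdmx (diag_mx s).
Proof.
move=> s0; split.
  apply/matrixP => i j; rewrite !mxE; case: (eqVneq i j) => [->|nij].
    by rewrite !mulr1n geC0_conj.
  by rewrite !mulr0n conjC0.
move=> v; rewrite quad_diag; apply: sumr_ge0 => j _.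
by rewrite mulr_ge0 // mul_conjC_ge0.
Qed.

Lemma quadC M D (v : 'rV[C]_d) :
  v *m (M^t* *m D *m M) *m adjrow v = (v *m M^t*) *m D *m adjrow (v *m M^t*).
Proof. by rewrite !adjrowE tCM trmxCK !mulmxA. Qed.

Lemma psd_conjU D M : psdmx D -> psdmx (M^t* *m D *m M).
Proof.
move=> pD; have [_ qD] := pD; split.
  by rewrite adjmxE !tCM trmxCK (herm_tC pD) mulmxA.
by move=> v; rewrite quadC.
Qed.

Lemma psd_diag_ge0 (U : 'M[C]_d) (s : 'rV[C]_d) i : U \is unitarymx ->
  psdmx (U^t* *m diag_mx s *m U) -> 0 <= s 0 i.
Proof.
move=> uU [_ q]; have := q (delta_mx 0 i *m U).
rewrite quadC mulmxtVK // quad_diag (bigD1 i) //= big1 ?addr0.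
  by rewrite !mxE /= !eqxx /= conjC1 !mulr1.
by move=> j ji; rewrite !mxE (negPf ji) mul0r mulr0.
Qed.

Lemma row_diag_mul (s : 'rV[C]_d) (U : 'M[C]_d) i :
  row i (diag_mx s *m U) = s 0 i *: row i U.
Proof. by apply/rowP => j; rewrite mul_diag_mx !mxE. Qed.

Lemma sqrt_eu A : psdmx A -> exists B0, [/\ psdmx B0, B0 *m B0 = A &
  forall B, psdmx B -> B *m B = A -> B = B0].
Proof.
move=> pA.
have hs : A \is hermsymmx.
  by rewrite is_hermitianmxE expr0 scale1r (herm_tC pA).
have /orthomx_spectralP eA := hermitian_normalmx hs.
set U := spectralmx A in eA; set s := spectral_diag A in eA.
have uU : U \is unitarymx by apply: spectral_unitarymx.
have UU : U *m U^t* = 1%:M by apply/unitarymxP.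
have UtU : U^t* *m U = 1%:M by rewrite -invmx_unitary // mulVmx // unitarymx_unit.
rewrite invmx_unitary // in eA.
have s0 : forall i, 0 <= s 0 i.
  by move=> i; apply: (@psd_diag_ge0 U s i uU); rewrite -eA.
pose r := \row_j sqrtC (s 0 j).
have r0 : forall j, 0 <= r 0 j by move=> j; rewrite mxE sqrtC_ge0.
have r2 : forall j, r 0 j ^+ 2 = s 0 j by move=> j; rewrite mxE sqrtCK.
exists (U^t* *m diag_mx r *m U); split.
- exact/psd_conjU/psd_diag.
- rewrite eA -!mulmxA (mulmxA U) UU mul1mx (mulmxA (diag_mx r)) mulmx_diag !mulmxA.
  congr (_ *m diag_mx _ *m _).
  by apply/rowP => j; rewrite mxE -expr2 r2.
move=> B pB BB.
have rowB : forall i, row i U *m B = r 0 i *: row i U.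
  move=> i; apply: eigen_sqrt => //; rewrite r2 -mulmxA BB eA.
  by rewrite -!row_mul !mulmxA UU mul1mx row_diag_mul.
have UB : U *m B = diag_mx r *m U.
  by apply/row_matrixP => i; rewrite row_mul rowB row_diag_mul.
by rewrite -mulmxA -UB mulmxA UtU mul1mx.
Qed.

Lemma sqrt_spec A : psdmx A -> psdmx (sqrtmx A) /\ sqrtmx A *m sqrtmx A = A.
Proof.
move=> pA; rewrite /sqrtmx; apply: (epsilon_spec (inhabits 0) (fun B : 'M[C]_d => psdmx B /\ B *m B = A)).
by have [B0 [p e _]] := sqrt_eu pA; exists B0.
Qed.

Lemma sqrt_uniq A B : psdmx A -> psdmx B -> B *m B = A -> sqrtmx A = B.
Proof.
move=> pA pB BB; have [B0 [_ _ u]] := sqrt_eu pA.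
have [p e] := sqrt_spec pA.
by rewrite (u _ pB BB) (u _ p e).
Qed.

Lemma hpd_sqrt A : hpd A -> hpd (sqrtmx A).
Proof.
move=> [pA uA]; have [p e] := sqrt_spec pA; split => //.
by move: uA; rewrite -{1}e unitmx_mul => /andP[].
Qed.

Lemma sqrt_sq A : hpd A -> sqrtmx A *m sqrtmx A = A.
Proof. by move=> [pA _]; have [] := sqrt_spec pA. Qed.

Lemma sqrt_inv A : hpd A -> sqrtmx (invmx A) = invmx (sqrtmx A).
Proof.
move=> hA; have hs := hpd_sqrt hA.
apply: sqrt_uniq; first by case: (hpd_inv hA).
  by case: (hpd_inv hs).
have us : sqrtmx A \in unitmx by case: hs.
by rewrite -invmxM // sqrt_sq.
Qed.

Lemma invmx3 A B M : A \in unitmx -> B \in unitmx -> M \in unitmx ->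
  invmx (A *m B *m M) = invmx M *m invmx B *m invmx A.
Proof.
move=> uA uB uM; rewrite invmxM ?unitmx_mul ?uA // invmxM //.
by rewrite mulmxA.
Qed.

End Aux.

Theorem mainTheorem8 (C : numClosedFieldType) (d : nat) (P Q : 'M[C]_d) :
  posdefmx P -> posdefmx Q ->
  fidR (gmean (invmx P) (invmx Q)) P Q = fidM P Q.
Proof.
move=> /posdef_hpd hP /posdef_hpd hQ.
have hp := hpd_sqrt hP; have pp := sqrt_sq hP.
set p := sqrtmx P in hp pp.
have up : p \in unitmx by case: hp.
have hQi := hpd_inv hQ.
have hM := psd_hpd_cong hQi hp.
set M := p *m invmx Q *m p in hM.
have hs := hpd_sqrt hM; have ss := sqrt_sq hM.
set s := sqrtmx M in hs ss.
have us : s \in unitmx by case: hs.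
have hpi := hpd_inv hp.
have upi : invmx p \in unitmx by case: hpi.
have eR : gmean (invmx P) (invmx Q) = invmx p *m s *m invmx p.
  by rewrite /gmean /= sqrt_inv // invmxK.
have hR : hpd (invmx p *m s *m invmx p) by apply: psd_hpd_cong.
have uR : invmx p *m s *m invmx p \in unitmx by case: hR.
have eM : fidM P Q = \tr (invmx (invmx p *m s *m invmx p)).
  rewrite /fidM /gmean /= -/p invmx3 // invmxK.
  have -> : invmx p *m Q *m invmx p = invmx M.
    by rewrite /M invmx3 // ?invmxK //; case: hQi.
  by rewrite sqrt_inv.
rewrite eR eM /fidR /=.
set R := invmx p *m s *m invmx p in hR uR *.
have hr := hpd_sqrt hR; have rr := sqrt_sq hR.
set r := sqrtmx R in hr rr *.
have ur : r \in unitmx by case: hr.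
have hX := psd_hpd_cong hQ hr.
have uQ : Q \in unitmx by case: hQ.
have RPR : R *m P *m R = invmx Q.
  rewrite /R -pp.
  have -> : invmx p *m s *m invmx p *m (p *m p) *m (invmx p *m s *m invmx p)
      = invmx p *m (s *m s) *m invmx p.
    by rewrite !mulmxA mulmxKV // mulmxK.
  by rewrite ss /M !mulmxA mulVmx // mul1mx mulmxK.
have rPr : r *m P *m r = invmx (r *m Q *m r).
  rewrite invmx3 // -RPR -rr.
  by rewrite !mulmxA !mulVmx // mul1mx -!mulmxA !mulmxV // mulmx1.
rewrite rPr sqrt_inv // mxtrace_mulC mulmxA mulmxV; last by case: (hpd_sqrt hX).
by rewrite mul1mx.
Qed.
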